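(* Let $R$ be a commutative ring containing $\mathbb Q$, let $f\in1+xR[[x]]$, and for $n\ge0$ set $$P_n:=\sum_{s=0}^n\frac{(-1)^s}{s!\,(n-s)!}\prod_{k=-(n-s)}^{s}f(kx)\in R[[x]].$$ Then the coefficients of $x^0,\dots,x^{n-1}$ in $P_n$ vanish and the coefficient of $x^n$ equals $(-1)^n$ times the coefficient of $x^n$ in $f^{n+1}$, i.e. $$P_n=(-1)^n\Bigl(\frac1{n!}\frac{d^n}{dx^n}\Big|_{x=0}f(x)^{n+1}\Bigr)x^n+O(x^{n+1}).$$ *)

(* Defs.v *)
(* Formal power series over R are coefficient sequences nat -> R. *)
From mathcomp Require Import all_boot all_order all_algebra.
Set Implicit Arguments. Unset Strict Implicit. Unset Printing Implicit Defensive.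
Import Order.TTheory GRing.Theory Num.Theory.
Local Open Scope ring_scope.

Definition pser (R : Type) := nat -> R.

Section PS.
Variable R : comAlgType rat.

Definition ps_one : pser R := fun m => if m is 0%N then 1 else 0.

Definition ps_mul (a b : pser R) : pser R :=
  fun m => \sum_(i < m.+1) a i * b (m - i)%N.

Definition ps_prod (l : seq (pser R)) : pser R := foldr ps_mul ps_one l.

Definition ps_pow (f : pser R) (n : nat) : pser R := iter n (ps_mul f) ps_one.

(* f(k x): coefficient j is k^j f_j *)
Definition ps_dil (k : int) (f : pser R) : pser R :=
  fun j => (k%:~R) ^+ j * f j.

(* the integers -(n-s), ..., s *)
Definition krange (n s : nat) : seq int :=
  [seq (i%:Z - (n - s)%:Z)%R | i <- iota 0 n.+1].

Definition Pn (f : pser R) (n : nat) : pser R :=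
  fun m => \sum_(s < n.+1)
    (((-1) ^+ s / ((s`!)%:R * ((n - s)`!)%:R)) : rat) *:
      ps_prod [seq ps_dil k f | k <- krange n s] m.

End PS.

(* Main.v *)
Require Import Defs.
From mathcomp Require Import all_boot all_order all_algebra.
From mathcomp Require Import ring zify.
Import Order.TTheory GRing.Theory Num.Theory.
Local Open Scope ring_scope.
Set Implicit Arguments. Unset Strict Implicit.

Definition Sdiff (R : comNzRingType) (n k : nat) : R :=
  \sum_(t < n.+1) (-1) ^+ t * 'C(n, t)%:R * (t%:R) ^+ k.

Lemma Sdiff_val (R : comNzRingType) (n k : nat) : (k <= n)%N ->
  Sdiff R n k = if k == n then (-1) ^+ n * (n`!)%:R else 0.
Proof.
elim: n k => [|n IH] k hk.
  move: hk; rewrite leqn0 => /eqP ->; rewrite /Sdiff big_ord1 /=.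
  by rewrite !expr0 mulr1 mul1r.
case: k hk => [|k] hk.
  rewrite /Sdiff /=.
  have := exprBn (1 : R) 1 n.+1; rewrite subrr expr0n /= => /esym E.
  apply: etrans E; apply: eq_bigr => i _.
  by rewrite !expr1n !mulr1 mulr_natr.
have step : Sdiff R n.+1 k.+1 =
   - (n.+1)%:R * \sum_(j < k.+1) 'C(k, j)%:R * Sdiff R n j.
  rewrite /Sdiff big_ord_recl /= expr0n /= mulr0 add0r.
  under [in RHS]eq_bigr do rewrite mulr_sumr.
  rewrite exchange_big /= mulr_sumr; apply: eq_bigr => t _.
  have H : ('C(n.+1, t.+1)%:R * (t.+1)%:R : R) = (n.+1)%:R * 'C(n, t)%:R.
    by rewrite -!natrM mulnC -mul_bin_diag.
  have H2 : \sum_(j < k.+1) 'C(k, j)%:R * ((-1) ^+ t * 'C(n, t)%:R * (t%:R : R) ^+ j)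
     = (-1) ^+ t * 'C(n, t)%:R * ((t.+1)%:R) ^+ k.
    rewrite -natr1 exprD1n mulr_sumr; apply: eq_bigr => j _.
    by rewrite -mulr_natl; ring.
  rewrite H2 /bump /= add1n.
  transitivity (- ((-1) ^+ t * (t.+1)%:R ^+ k) * ('C(n.+1, t.+1)%:R * (t.+1)%:R) : R).
    rewrite !exprS; ring.
  rewrite H; ring.
rewrite step.
case: (ltngtP k n) => hkn.
- rewrite big1 ?mulr0 //; last first.
  move=> j _; rewrite IH; last by rewrite -ltnS (leq_trans (ltn_ord j)).
  have : (j < n)%N by rewrite (leq_trans (ltn_ord j)).
  by rewrite ltn_neqAle => /andP [/negbTE -> _]; rewrite mulr0.
  by rewrite eqSS (ltn_eqF hkn).
- by move: hk; rewrite ltnS leqNgt hkn.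
- subst k; rewrite big_ord_recr /= big1 ?add0r.
    rewrite IH // eqxx binn mul1r eqxx factS natrM exprS; ring.
  move=> j _; rewrite IH; last by rewrite ltnW.
  by rewrite (ltn_eqF (ltn_ord j)) mulr0.
Qed.
Lemma fdiff_poly (R : comNzRingType) (Sdiff : nat -> nat -> R)
  (HS : forall n k, Sdiff n k = \sum_(t < n.+1) (-1) ^+ t * 'C(n, t)%:R * (t%:R) ^+ k)
  (Hv : forall n k, (k <= n)%N -> Sdiff n k = if k == n then (-1) ^+ n * (n`!)%:R else 0)
  n (p : {poly R}) : (size p <= n.+1)%N ->
  \sum_(t < n.+1) (-1) ^+ t * 'C(n, t)%:R * p.[t%:R] = (-1) ^+ n * (n`!)%:R * p`_n.
Proof.
move=> hp.
under eq_bigr do rewrite (horner_coef_wide _ hp) mulr_sumr.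
rewrite exchange_big /=.
rewrite (eq_bigr (fun k : 'I_n.+1 => p`_k * Sdiff n k)); last first.
  move=> k _; rewrite HS mulr_sumr; apply: eq_bigr => t _; ring.
rewrite big_ord_recr /= big1 ?add0r.
  by rewrite Hv // eqxx mulrC.
move=> k _; rewrite Hv; last by rewrite ltnW.
by rewrite (ltn_eqF (ltn_ord k)) mulr0.
Qed.


Lemma sign2 (R : comPzRingType) n : ((-1) ^+ n * (-1) ^+ n : R) = 1.
Proof. by rewrite -exprMn mulrNN mulr1 expr1n. Qed.

Lemma coefrat n t : (t <= n)%N ->
  ((-1) ^+ (n - t) / (((n - t)`!)%:R * ((n - (n - t))`!)%:R) : rat)
  = ((-1) ^+ n / (n`!)%:R) * ((-1) ^+ t * 'C(n, t)%:R).
Proof.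
move=> ht; rewrite subKn //.
have hn : ((-1) ^+ n : rat) = (-1) ^+ (n - t) * (-1) ^+ t by rewrite -exprD subnK.
rewrite hn -(bin_fact ht) !natrM.
have h1 : ((n - t)`!%:R : rat) != 0 by rewrite pnatr_eq0 -lt0n fact_gt0.
have h2 : (t`!%:R : rat) != 0 by rewrite pnatr_eq0 -lt0n fact_gt0.
have h3 : ('C(n, t)%:R : rat) != 0 by rewrite pnatr_eq0 -lt0n bin_gt0.
rewrite [RHS](_ : _ = (-1) ^+ (n - t) * ((-1) ^+ t * (-1) ^+ t) / ((n - t)`!%:R * t`!%:R)).
  by rewrite sign2 mulr1.
by field; rewrite ?h1 ?h2 ?h3.
Qed.

Section Q.
Variable R : comAlgType rat.
Variable f : pser R.

Fixpoint qL (L : seq nat) (m : nat) : {poly R} :=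
  match L with
  | [::] => if m is 0%N then 1 else 0
  | i :: L' => \sum_(a < m.+1) ((i%:R)%:P - 'X) ^+ a * ((f a)%:P * qL L' (m - a))
  end.

Lemma qL_eval (L : seq nat) (t : nat) (m : nat) :
  ps_prod [seq ps_dil k f | k <- [seq (i%:Z - t%:Z)%R | i <- L]] m = (qL L m).[t%:R].
Proof.
elim: L m => [|i L IH] m /=.
  by case: m => [|m]; rewrite /ps_prod /ps_one /= ?hornerC.
rewrite /ps_mul horner_sum; apply: eq_bigr => a _.
rewrite !hornerE -IH {1}/ps_dil rmorphB /=.
by [].
Qed.

Lemma coef_mul_top (p q : {poly R}) i j : (size p <= i.+1)%N -> (size q <= j.+1)%N ->
  (p * q)`_(i + j) = p`_i * q`_j.
Proof.
move=> hp hq; rewrite coefM (bigD1 (@Ordinal (i + j).+1 i (leq_addr j i))) //= addKn.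
rewrite big1 ?addr0 // => l /= hl.
have [hli|hli] := ltnP l i.
  rewrite [q`_ _]nth_default ?mulr0 //; apply: (leq_trans hq).
  lia.
rewrite [p`_l]nth_default ?mul0r //; apply: (leq_trans hp).
by move: hl; rewrite -val_eqE /= => hl; lia.
Qed.


Lemma sizeA (c : R) : size (c%:P - 'X : {poly R}) = 2%N.
Proof. by rewrite -opprB size_polyN size_XsubC. Qed.

Lemma sizeAexp (c : R) a : (size ((c%:P - 'X) ^+ a : {poly R}) <= a.+1)%N.
Proof.
have := size_poly_exp_leq (c%:P - 'X) a; rewrite sizeA /=.
by rewrite mul1n.
Qed.

Lemma coefAexp (c : R) a : ((c%:P - 'X) ^+ a : {poly R})`_a = (-1) ^+ a.
Proof.
elim: a => [|a IH]; first by rewrite expr0 coef1.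
rewrite exprSr -addn1 coef_mul_top ?IH ?sizeAexp ?sizeA //.
by rewrite coefB coefC coefX /= sub0r addn1 exprSr.
Qed.

Lemma qL_size L m : (size (qL L m) <= m.+1)%N.
Proof.
elim: L m => [|i L IH] m /=.
  by case: m => [|m]; rewrite ?size_poly1 ?size_poly0.
apply: (big_ind (fun p : {poly R} => (size p <= m.+1)%N)).
- by rewrite size_poly0.
- move=> x y hx hy; apply: leq_trans (size_polyD _ _) _; by rewrite geq_max hx hy.
move=> a _.
have h1 := sizeAexp (i%:R) a.
have h2 : (size ((f a)%:P * qL L (m - a))%R <= (m - a).+1)%N.
  by rewrite mul_polyC (leq_trans (size_scale_leq _ _)) ?IH.
have h3 := size_polyMleq (((i%:R)%:P - 'X) ^+ a) ((f a)%:P * qL L (m - a)).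
have ha := ltn_ord a.
move: h1 h2 h3; set x := size _; set y := size _; set z := size _; lia.
Qed.

Lemma qL_coef L m : (qL L m)`_m = (-1) ^+ m * ps_pow f (size L) m.
Proof.
elim: L m => [|i L IH] m /=.
  by case: m => [|m]; rewrite /ps_pow /ps_one /= ?coef1 ?coef0 ?mulr0 ?mulr1.
rewrite coef_sum /ps_pow /= -/(ps_pow f (size L)) /ps_mul mulr_sumr.
apply: eq_bigr => a _.
have ha : (a <= m)%N by rewrite -ltnS ltn_ord.
have hsz : (size ((f a)%:P * qL L (m - a))%R <= (m - a).+1)%N.
  by rewrite mul_polyC (leq_trans (size_scale_leq _ _)) ?qL_size.
have E := coef_mul_top (sizeAexp (i%:R) a) hsz.
rewrite (subnKC ha) in E.
rewrite E coefAexp coefCM IH.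
have -> : ((-1) ^+ m : R) = (-1) ^+ a * (-1) ^+ (m - a) by rewrite -exprD subnKC.
ring.
Qed.

End Q.

Unset Implicit Arguments.
Set Strict Implicit.

Theorem mainTheorem19 (R : comAlgType rat) (f : pser R) (n : nat) :
  f 0%N = 1 ->
  (forall m : nat, (m < n)%N -> Pn f n m = 0) /\
  Pn f n n = (-1) ^+ n * ps_pow f n.+1 n.
Proof.
move=> _.
pose a : rat := (-1) ^+ n / (n`!)%:R.
have HP : forall m, (m <= n)%N ->
    Pn f n m = a *: ((-1) ^+ n * (n`!)%:R * (qL f (iota 0 n.+1) m)`_n).
  move=> m hm; rewrite /Pn.
  under eq_bigr do rewrite /krange qL_eval.
  set Q := qL f (iota 0 n.+1) m.
  rewrite (reindex_inj rev_ord_inj) /=.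
  rewrite (eq_bigr (fun t : 'I_n.+1 => a *:
      ((-1) ^+ t * 'C(n, t)%:R * Q.[t%:R]))); last first.
    move=> t _; have ht : (t <= n)%N by rewrite -ltnS ltn_ord.
    rewrite subSS (coefrat ht) subKn // -scalerA; congr (_ *: _).
    by rewrite -mulr_algl -in_algE rmorphM (rmorph_sign (GRing.in_alg R)) (rmorph_nat (GRing.in_alg R)).
  rewrite -scaler_sumr (@fdiff_poly R (@Sdiff R) (fun n k => erefl) (@Sdiff_val R) n Q) //.
  exact: leq_trans (qL_size _ _ _) _.
split.
  move=> m hm; rewrite (HP m (ltnW hm)).
  have hq : (size (qL f (iota 0 n.+1) m) <= n)%N.
    exact: leq_trans (qL_size _ _ _) hm.
  by rewrite (nth_default 0 hq) mulr0 scaler0.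
rewrite HP // qL_coef size_iota -mulr_algl.
have Ha : a%:A * (n`!)%:R = (-1) ^+ n :> R.
  rewrite -in_algE -(rmorph_nat (GRing.in_alg R)) -rmorphM divfK ?(rmorph_sign (GRing.in_alg R)) //.
  by rewrite pnatr_eq0 -lt0n fact_gt0.
transitivity (a%:A * (n`!)%:R * ((-1) ^+ n * ((-1) ^+ n * ps_pow f n.+1 n)) : R).
  ring.
by rewrite Ha mulrA sign2 mul1r.
Qed.
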